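(* Let $(X,\widetilde{\tau},\mathfrak{a}_E,E)$ be a soft aura topological space. For every $(G,E)\in\mathrm{SS}(X,E)$, the transfinite sequence $(\mathrm{cl}_{\mathfrak{a}}^{\alpha}(G,E))_{\alpha}$ stabilizes at some ordinal $\gamma\le|X|$. The operator $\mathrm{cl}_{\mathfrak{a}}^{\infty}(G,E):=\mathrm{cl}_{\mathfrak{a}}^{\gamma}(G,E)$ is a soft Kuratowski closure operator, i.e. it satisfies $\mathrm{cl}_{\mathfrak{a}}^{\infty}(\widetilde{\Phi})=\widetilde{\Phi}$, $(G,E)\sqsubseteq\mathrm{cl}_{\mathfrak{a}}^{\infty}(G,E)$, $\mathrm{cl}_{\mathfrak{a}}^{\infty}((G,E)\sqcup(H,E))=\mathrm{cl}_{\mathfrak{a}}^{\infty}(G,E)\sqcup\mathrm{cl}_{\mathfrak{a}}^{\infty}(H,E)$, and $\mathrm{cl}_{\mathfrak{a}}^{\infty}(\mathrm{cl}_{\mathfrak{a}}^{\infty}(G,E))=\mathrm{cl}_{\mathfrak{a}}^{\infty}(G,E)$ for all $(G,E),(H,E)\in\mathrm{SS}(X,E)$.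
   Context: Let $X$ be a nonempty set and $E$ a nonempty parameter set. A soft set over $X$ is a map $F:E\to\mathcal{P}(X)$, written $(F,E)$; $\mathrm{SS}(X,E)$ denotes all soft sets. Operations ($\sqsubseteq$, soft union $\sqcup$ including arbitrary unions, etc.) are parameterwise; $\widetilde{\Phi}$ is the soft set with all values $\emptyset$. A soft topology $\widetilde{\tau}$ is a subfamily of $\mathrm{SS}(X,E)$ containing $\widetilde{\Phi}$ and the soft set with all values $X$, closed under arbitrary soft unions and finite soft intersections. A soft scope function is a map $\mathfrak{a}_E:X\to\widetilde{\tau}$ with $x\in\mathfrak{a}_E(x)(e)$ for all $x\in X$, $e\in E$; $(X,\widetilde{\tau},\mathfrak{a}_E,E)$ is a soft aura topological space. Soft aura-closure: $\mathrm{cl}_{\mathfrak{a}}(G,E)(e)=\{x\in X:\mathfrak{a}_E(x)(e)\cap G(e)\neq\emptyset\}$. Transfinite iterates: $\mathrm{cl}_{\mathfrak{a}}^0(G,E)=(G,E)$; $\mathrm{cl}_{\mathfrak{a}}^{\alpha+1}(G,E)=\mathrm{cl}_{\mathfrak{a}}(\mathrm{cl}_{\mathfrak{a}}^{\alpha}(G,E))$; $\mathrm{cl}_{\mathfrak{a}}^{\lambda}(G,E)=\bigsqcup_{\alpha<\lambda}\mathrm{cl}_{\mathfrak{a}}^{\alpha}(G,E)$ for limit ordinals $\lambda$. *)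

(* Defs.v *)
From Stdlib Require Import Classical ClassicalEpsilon FunctionalExtensionality.

Set Implicit Arguments.

Definition softset (X E : Type) := E -> X -> Prop.

Section Soft.
Variables X E : Type.

Definition soft_empty : softset X E := fun _ _ => False.
Definition soft_full : softset X E := fun _ _ => True.
Definition soft_sub (G H : softset X E) : Prop := forall e x, G e x -> H e x.
Definition soft_union (G H : softset X E) : softset X E :=
  fun e x => G e x \/ H e x.
Definition soft_inter (G H : softset X E) : softset X E :=
  fun e x => G e x /\ H e x.
Definition soft_bigunion (F : softset X E -> Prop) : softset X E :=
  fun e x => exists S, F S /\ S e x.

Definition soft_topology (tau : softset X E -> Prop) : Prop :=
  tau soft_empty /\ tau soft_full /\
  (forall F : softset X E -> Prop, (forall S, F S -> tau S) -> tau (soft_bigunion F)) /\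
  (forall S T, tau S -> tau T -> tau (soft_inter S T)).

Definition soft_scope (tau : softset X E -> Prop) (a : X -> softset X E) : Prop :=
  forall x, tau (a x) /\ forall e, a x e x.

Definition aura_cl (a : X -> softset X E) (G : softset X E) : softset X E :=
  fun e x => exists y, a x e y /\ G e y.
End Soft.

(* Ordinals are represented by (elements of) well-ordered types. *)
Record wellorder := WellOrder {
  wo_car :> Type;
  wo_lt : wo_car -> wo_car -> Prop;
  wo_wf : well_founded wo_lt;
  wo_trans : forall x y z, wo_lt x y -> wo_lt y z -> wo_lt x z;
  wo_total : forall x y, wo_lt x y \/ x = y \/ wo_lt y x
}.

Definition ipred {W : wellorder} (alpha beta : W) : Prop :=
  wo_lt W beta alpha /\ forall d, wo_lt W d alpha -> d = beta \/ wo_lt W d beta.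

Section Transfinite.
Variables X E : Type.
Variable a : X -> softset X E.
Variable G : softset X E.
Variable W : wellorder.

(* cl^0 = G ; cl^(b+1) = cl_a(cl^b) ; cl^lambda = union_{b<lambda} cl^b *)
Definition tf_step (alpha : W)
    (rec : forall beta : W, wo_lt W beta alpha -> softset X E) : softset X E :=
  match excluded_middle_informative (exists beta, ipred alpha beta) with
  | left h =>
      let (beta, hb) := constructive_indefinite_description _ h in
      aura_cl a (rec beta (proj1 hb))
  | right _ =>
      match excluded_middle_informative (exists beta, wo_lt W beta alpha) with
      | left _ => fun e x => exists beta (h : wo_lt W beta alpha), rec beta h e x
      | right _ => G
      end
  end.

Definition tf_iter : W -> softset X E :=
  Fix (wo_wf W) (fun _ => softset X E) tf_step.
End Transfinite.

Definition card_lt (A B : Type) : Prop :=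
  (exists f : A -> B, forall u v, f u = f v -> u = v) /\
  ~ (exists g : B -> A, forall u v, g u = g v -> u = v).

(* the ordinal gamma (as an element of W) is <= |X| (the initial ordinal of
   cardinality |X|): every beta < gamma has |beta| < |X|. *)
Definition ord_le_card (W : wellorder) (gamma : W) (X : Type) : Prop :=
  forall beta, wo_lt W beta gamma -> card_lt {d : W | wo_lt W d beta} X.

Definition stabilizes_at (X E : Type) (a : X -> softset X E) (G : softset X E)
    (W : wellorder) (gamma : W) : Prop :=
  ord_le_card W gamma X /\
  aura_cl a (tf_iter a G W gamma) = tf_iter a G W gamma /\
  (forall alpha, wo_lt W gamma alpha -> tf_iter a G W alpha = tf_iter a G W gamma).

(* cl^infty(G) := cl^gamma(G) for a stabilization ordinal gamma <= |X|
   (chosen; default G if none exists, which the theorem rules out). *)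
Definition clinf (X E : Type) (a : X -> softset X E) (G : softset X E) : softset X E :=
  match excluded_middle_informative
          (exists (W : wellorder) (gamma : W), stabilizes_at a G W gamma) with
  | left h =>
      let (W, hW) := constructive_indefinite_description _ h in
      let (gamma, _) := constructive_indefinite_description _ hW in
      tf_iter a G W gamma
  | right _ => G
  end.

(* Main.v *)
Require Import Defs.
From Stdlib Require Import Classical ClassicalEpsilon FunctionalExtensionality PropExtensionality Arith Lia.

Lemma sext {X E} (F F' : softset X E) : (forall e x, F e x <-> F' e x) -> F = F'.
Proof.
  intro h. apply functional_extensionality; intro e.
  apply functional_extensionality; intro x. apply propositional_extensionality. apply h.
Qed.

Lemma santi {X E} (F F' : softset X E) : soft_sub F F' -> soft_sub F' F -> F = F'.
Proof. intros h1 h2. apply sext. intros e x; split; auto. Qed.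

Lemma tf_unfold {X E} (a : X -> softset X E) G (W : wellorder) (alpha : W) :
  tf_iter a G W alpha = tf_step a G W alpha (fun b _ => tf_iter a G W b).
Proof.
  unfold tf_iter at 1. rewrite Fix_eq. reflexivity.
  intros x f g hfg.
  assert (f = g) by (apply functional_extensionality_dep; intro y;
                     apply functional_extensionality_dep; intro p; apply hfg).
  subst; reflexivity.
Qed.

Lemma ext_cl {X E} (tau : softset X E -> Prop) a (ha : soft_scope tau a) F :
  soft_sub F (aura_cl a F).
Proof. intros e x h. exists x. split; [apply (proj2 (ha x)) | exact h]. Qed.

Lemma mono_cl {X E} (a : X -> softset X E) F F' :
  soft_sub F F' -> soft_sub (aura_cl a F) (aura_cl a F').
Proof. intros h e x [y [h1 h2]]. exists y; split; [exact h1 | apply h; exact h2]. Qed.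

Lemma tf_ge {X E} (tau : softset X E -> Prop) a (ha : soft_scope tau a) G (W : wellorder) :
  forall alpha : W, soft_sub G (tf_iter a G W alpha).
Proof.
  intro alpha. induction alpha as [alpha IH] using (well_founded_ind (wo_wf W)).
  rewrite tf_unfold. unfold tf_step.
  destruct (excluded_middle_informative (exists beta, ipred alpha beta)) as [h|h].
  - destruct (constructive_indefinite_description _ h) as [beta hb].
    intros e x hx. apply (ext_cl tau a ha). apply (IH beta (proj1 hb)). exact hx.
  - destruct (excluded_middle_informative (exists beta, wo_lt W beta alpha)) as [h2|h2].
    + intros e x hx. destruct h2 as [beta hb]. exists beta, hb. apply (IH beta hb). exact hx.
    + intros e x hx; exact hx.
Qed.

Lemma tf_le {X E} (a : X -> softset X E) G (W : wellorder) F :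
  soft_sub (aura_cl a F) F -> soft_sub G F -> forall alpha : W, soft_sub (tf_iter a G W alpha) F.
Proof.
  intros hF hG alpha. induction alpha as [alpha IH] using (well_founded_ind (wo_wf W)).
  rewrite tf_unfold. unfold tf_step.
  destruct (excluded_middle_informative (exists beta, ipred alpha beta)) as [h|h].
  - destruct (constructive_indefinite_description _ h) as [beta hb].
    intros e x hx. apply hF. exact (mono_cl a _ _ (IH beta (proj1 hb)) e x hx).
  - destruct (excluded_middle_informative (exists beta, wo_lt W beta alpha)) as [h2|h2].
    + intros e x [beta [hb hx]]. exact (IH beta hb e x hx).
    + exact hG.
Qed.

Definition olt (x y : option nat) : Prop :=
  match x, y with
  | Some n, Some m => n < m
  | Some _, None => True
  | None, _ => False
  end.

Lemma olt_wf : well_founded olt.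
Proof.
  assert (hs : forall n, Acc olt (Some n)).
  { intro n. induction n as [n IH] using (well_founded_ind lt_wf).
    constructor. intros y hy. destruct y as [k|]; [apply IH; exact hy | contradiction]. }
  intro x. destruct x as [n|]; [apply hs|].
  constructor. intros y hy. destruct y as [k|]; [apply hs | contradiction].
Qed.

Lemma olt_trans : forall x y z, olt x y -> olt y z -> olt x z.
Proof. intros [x|] [y|] [z|]; simpl; intros; auto; try lia; contradiction. Qed.

Lemma olt_total : forall x y, olt x y \/ x = y \/ olt y x.
Proof.
  intros [x|] [y|]; simpl; auto.
  destruct (Nat.lt_trichotomy x y) as [h|[h|h]]; auto.
Qed.

Definition OW : wellorder := @WellOrder (option nat) olt olt_wf olt_trans olt_total.

Definition cs {X E} (a : X -> softset X E) G (n : nat) : softset X E :=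
  tf_iter a G OW (Some n).

Lemma c0 {X E} (a : X -> softset X E) G : cs a G 0 = G.
Proof.
  unfold cs. rewrite tf_unfold. unfold tf_step.
  destruct (excluded_middle_informative _) as [h|h].
  - exfalso. destruct h as [beta [hb _]]. destruct beta; simpl in hb; [lia|contradiction].
  - destruct (excluded_middle_informative _) as [h2|h2]; [|reflexivity].
    exfalso. destruct h2 as [beta hb]. destruct beta; simpl in hb; [lia|contradiction].
Qed.

Lemma cS {X E} (a : X -> softset X E) G n : cs a G (S n) = aura_cl a (cs a G n).
Proof.
  unfold cs. rewrite tf_unfold. unfold tf_step.
  destruct (excluded_middle_informative _) as [h|h].
  - destruct (constructive_indefinite_description _ h) as [beta hb].
    assert (beta = Some n) as ->.
    { destruct hb as [hb1 hb2].
      destruct (hb2 (Some n)) as [e|e]; [simpl; lia | symmetry; exact e |].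
      destruct beta as [k|]; simpl in *; [lia|contradiction]. }
    reflexivity.
  - exfalso; apply h. exists (Some n). split; [simpl; lia|].
    intros d hd. destruct d as [k|]; simpl in *; [|contradiction].
    destruct (Nat.eq_dec k n); [left; congruence | right; lia].
Qed.

Lemma cNone {X E} (a : X -> softset X E) G :
  tf_iter a G OW None = fun e x => exists n, cs a G n e x.
Proof.
  rewrite tf_unfold. unfold tf_step.
  destruct (excluded_middle_informative _) as [h|h].
  - exfalso. destruct h as [beta [hb1 hb2]].
    destruct beta as [k|]; [|simpl in hb1; contradiction].
    destruct (hb2 (Some (S k))) as [e|e]; [simpl; exact I | injection e; lia | simpl in e; lia].
  - destruct (excluded_middle_informative _) as [h2|h2].
    + apply sext. intros e x; split.
      * intros [beta [hb hx]]. destruct beta as [k|]; [exists k; exact hx | simpl in hb; contradiction].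
      * intros [k hk]. exists (Some k). exists I. exact hk.
    + exfalso; apply h2; exists (Some 0); exact I.
Qed.

Lemma c_mono {X E} (tau : softset X E -> Prop) a (ha : soft_scope tau a) G :
  forall k j, k <= j -> soft_sub (cs a G k) (cs a G j).
Proof.
  intros k j hkj. induction hkj.
  - intros e x h; exact h.
  - intros e x h. rewrite cS. apply (ext_cl tau a ha). apply IHhkj; exact h.
Qed.

Lemma c_stable {X E} (a : X -> softset X E) G n :
  aura_cl a (cs a G n) = cs a G n -> forall j, cs a G (n + j) = cs a G n.
Proof.
  intros hn j. induction j.
  - rewrite Nat.add_0_r; reflexivity.
  - rewrite Nat.add_succ_r, cS, IHj; exact hn.
Qed.

Lemma php m (h : nat -> nat) :
  (forall i, i <= m -> h i < m) ->
  (forall i j, i <= m -> j <= m -> h i = h j -> i = j) -> False.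
Proof.
  revert h. induction m; intros h hr hi.
  - specialize (hr 0 (le_n 0)); lia.
  - apply (IHm (fun i => if Nat.eq_dec (h i) m then h (S m) else h i)).
    + intros i hi'. destruct (Nat.eq_dec (h i) m) as [e|e].
      * assert (h (S m) < S m) by (apply hr; lia).
        assert (h (S m) <> m).
        { intro e'. assert (i = S m) by (apply hi; [lia | lia | congruence]). lia. }
        lia.
      * assert (h i < S m) by (apply hr; lia). lia.
    + intros i j hi' hj' e.
      destruct (Nat.eq_dec (h i) m); destruct (Nat.eq_dec (h j) m).
      * apply hi; [lia | lia | congruence].
      * assert (S m = j) by (apply hi; [lia | lia | exact e]). lia.
      * assert (i = S m) by (apply hi; [lia | lia | exact e]). lia.
      * apply hi; [lia | lia | exact e].
Qed.

Lemma least (P : nat -> Prop) : (exists n, P n) -> exists n, P n /\ forall m, m < n -> ~ P m.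
Proof.
  intros [n hn]. revert hn. induction n as [n IH] using (well_founded_ind lt_wf). intro hn.
  destruct (classic (exists m, m < n /\ P m)) as [[m [hm hpm]]|hno].
  - exact (IH m hm hpm).
  - exists n. split; auto. intros m hm hp. apply hno. eauto.
Qed.

Definition toN (o : option nat) := match o with Some k => k | None => 0 end.

Lemma sig_inj m (u v : {d : OW | wo_lt OW d (Some m)}) :
  toN (proj1_sig u) = toN (proj1_sig v) -> u = v.
Proof.
  destruct u as [[u|] hu]; [|simpl in hu; contradiction].
  destruct v as [[v|] hv]; [|simpl in hv; contradiction].
  simpl. intro e; subst v. f_equal. apply proof_irrelevance.
Qed.

Lemma sig_rng m (u : {d : OW | wo_lt OW d (Some m)}) : toN (proj1_sig u) < m.
Proof. destruct u as [[u|] hu]; simpl in *; [exact hu | contradiction]. Qed.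

Lemma card_from_inj (X : Type) m (f : nat -> X) :
  (forall i j, i <= m -> j <= m -> f i = f j -> i = j) ->
  card_lt {d : OW | wo_lt OW d (Some m)} X.
Proof.
  intro hf. split.
  - exists (fun d => f (toN (proj1_sig d))). intros u v e. apply sig_inj.
    apply hf; [pose proof (sig_rng m u); lia | pose proof (sig_rng m v); lia | exact e].
  - intros [g hg]. apply (php m (fun i => toN (proj1_sig (g (f i))))).
    + intros i _. apply sig_rng.
    + intros i j hi hj e. apply hf; auto. apply hg. apply sig_inj. exact e.
Qed.

Lemma inj_nonfix {X E} (tau : softset X E -> Prop) a (ha : soft_scope tau a) (hX : inhabited X) G m :
  cs a G (S m) <> cs a G m ->
  exists f : nat -> X, forall i j, i <= m -> j <= m -> f i = f j -> i = j.
Proof.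
  intros hneq. destruct hX as [x0].
  assert (exists e x, cs a G (S m) e x /\ ~ cs a G m e x) as [e [x1 [hx1 hx1']]].
  { apply NNPP. intro hn. apply hneq. apply sext. intros e x. split.
    - intro hx. apply NNPP; intro hx'. apply hn. exists e, x. auto.
    - apply (c_mono tau a ha); lia. }
  assert (hk : forall k, k <= m -> exists x, cs a G (S k) e x /\ ~ cs a G k e x).
  { intros k hk. apply NNPP. intro hn.
    assert (H : forall j x, cs a G (k + j) e x -> cs a G k e x).
    { induction j; intros x hx.
      - rewrite Nat.add_0_r in hx; exact hx.
      - rewrite Nat.add_succ_r, cS in hx. destruct hx as [y [hy1 hy2]].
        apply NNPP; intro hnx. apply hn. exists x. split; [|exact hnx].
        rewrite cS. exists y; split; [exact hy1 | apply IHj; exact hy2]. }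
    apply hx1'. apply (c_mono tau a ha G k m); [lia|]. apply (H (S m - k)).
    replace (k + (S m - k)) with (S m) by lia. exact hx1. }
  exists (fun k => epsilon (inhabits x0) (fun x => cs a G (S k) e x /\ ~ cs a G k e x)).
  intros i j hi hj hf.
  pose proof (epsilon_spec (inhabits x0) _ (hk i hi)) as [si si'].
  pose proof (epsilon_spec (inhabits x0) _ (hk j hj)) as [sj sj'].
  cbv beta in hf.
  destruct (Nat.lt_trichotomy i j) as [hij|[hij|hij]]; auto; exfalso.
  - rewrite hf in si. apply sj'. apply (c_mono tau a ha G (S i) j); [lia | exact si].
  - rewrite <- hf in sj. apply si'. apply (c_mono tau a ha G (S j) i); [lia | exact sj].
Qed.

Lemma card_nonfix {X E} (tau : softset X E -> Prop) a (ha : soft_scope tau a) (hX : inhabited X) G m :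
  cs a G (S m) <> cs a G m -> card_lt {d : OW | wo_lt OW d (Some m)} X.
Proof.
  intro h. destruct (inj_nonfix tau a ha hX G m h) as [f hf].
  exact (card_from_inj X m f hf).
Qed.

Lemma exist_stab {X E} (tau : softset X E -> Prop) a (ha : soft_scope tau a) (hX : inhabited X) G :
  exists (W : wellorder) (gamma : W), stabilizes_at a G W gamma.
Proof.
  exists OW.
  destruct (classic (exists n, aura_cl a (cs a G n) = cs a G n)) as [hex|hnex].
  - destruct (least _ hex) as [n [hn hmin]]. exists (Some n). split; [|split].
    + intros beta hb. destruct beta as [m|]; [|simpl in hb; contradiction].
      simpl in hb. apply (card_nonfix tau a ha hX G). intro e.
      apply (hmin m hb). rewrite <- cS. exact e.
    + exact hn.
    + intros alpha hal. destruct alpha as [m|].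
      * simpl in hal.
        assert (cs a G m = cs a G n) as H.
        { replace m with (n + (m - n)) by lia. apply c_stable; exact hn. }
        exact H.
      * rewrite cNone. apply sext. intros e x; split.
        -- intros [k hk]. change (cs a G n e x).
           destruct (le_lt_dec k n) as [l|l].
           ++ exact (c_mono tau a ha G k n l e x hk).
           ++ rewrite <- (c_stable a G n hn (k - n)).
              replace (n + (k - n)) with k by lia. exact hk.
        -- intro hx. exists n. exact hx.
  - exists None. split; [|split].
    + intros beta hb. destruct beta as [m|]; [|simpl in hb; contradiction].
      apply (card_nonfix tau a ha hX G). intro e. apply hnex. exists m.
      rewrite <- cS. exact e.
    + rewrite cNone. apply sext. intros e x; split.
      * intros [y [hy [k hk]]]. exists (S k). rewrite cS. exists y; auto.
      * intros [k hk]. exists x. split; [apply (proj2 (ha x)) | exists k; exact hk].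
    + intros alpha hal. destruct alpha; simpl in hal; contradiction.
Qed.

Lemma clinf_props {X E} (tau : softset X E -> Prop) a (ha : soft_scope tau a) (hX : inhabited X) G :
  soft_sub G (clinf a G) /\ aura_cl a (clinf a G) = clinf a G /\
  (forall F, soft_sub (aura_cl a F) F -> soft_sub G F -> soft_sub (clinf a G) F).
Proof.
  assert (exists (W : wellorder) (gamma : W), stabilizes_at a G W gamma /\
            clinf a G = tf_iter a G W gamma) as [W [gamma [hs ->]]].
  { unfold clinf.
    destruct (excluded_middle_informative _) as [h|h].
    - destruct (constructive_indefinite_description _ h) as [W hW].
      destruct (constructive_indefinite_description _ hW) as [g hg].
      exists W, g. split; [exact hg | reflexivity].
    - exfalso. apply h. exact (exist_stab tau a ha hX G). }
  destruct hs as [_ [hfix _]].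
  split; [|split].
  - apply (tf_ge tau a ha).
  - exact hfix.
  - intros F hF hG. apply tf_le; assumption.
Qed.

Theorem theorem3p16 (X E : Type) (tau : softset X E -> Prop) (a : X -> softset X E)
  (hX : inhabited X) (hE : inhabited E)
  (htau : soft_topology tau) (ha : soft_scope tau a) :
  (forall G : softset X E, exists (W : wellorder) (gamma : W), stabilizes_at a G W gamma) /\
  clinf a (@soft_empty X E) = @soft_empty X E /\
  (forall G : softset X E, soft_sub G (clinf a G)) /\
  (forall G H : softset X E,
      clinf a (soft_union G H) = soft_union (clinf a G) (clinf a H)) /\
  (forall G : softset X E, clinf a (clinf a G) = clinf a G).
Proof.
  pose proof (clinf_props tau a ha hX) as P.
  split; [|split; [|split; [|split]]].
  - intro G. exact (exist_stab tau a ha hX G).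
  - destruct (P (@soft_empty X E)) as [_ [_ h3]].
    apply santi; [|intros e x []].
    apply h3; [intros e x [y [_ []]] | intros e x []].
  - intro G. exact (proj1 (P G)).
  - intros G H.
    destruct (P G) as [g1 [g2 g3]]. destruct (P H) as [k1 [k2 k3]].
    destruct (P (soft_union G H)) as [u1 [u2 u3]].
    apply santi.
    + apply u3.
      * intros e x [y [hy [hy1|hy2]]].
        -- left. rewrite <- g2. exists y; auto.
        -- right. rewrite <- k2. exists y; auto.
      * intros e x [hx|hx]; [left; apply g1; exact hx | right; apply k1; exact hx].
    + intros e x [hx|hx].
      * apply (g3 (clinf a (soft_union G H))); [rewrite u2; intros ? ? h; exact h | | exact hx].
        intros e' x' h. apply u1. left; exact h.
      * apply (k3 (clinf a (soft_union G H))); [rewrite u2; intros ? ? h; exact h | | exact hx].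
        intros e' x' h. apply u1. right; exact h.
  - intro G. destruct (P G) as [g1 [g2 g3]].
    destruct (P (clinf a G)) as [h1 [h2 h3]].
    apply santi; [|exact h1].
    apply h3; [rewrite g2; intros ? ? h; exact h | intros ? ? h; exact h].
Qed.
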